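(* Let $k\geq 3$ be an integer, let $G$ be a graph, and let $G'$ be the graph obtained from $G$ by the $k$-edge-gadget transformation (with respect to any choice of orientations). Then $G$ admits a proper $k$-coloring if and only if $G'$ admits a $k$-partial $k$-coloring.
   Context: A $k$-partial $c$-coloring of a graph $G=(V,E)$ is a map $\gamma:V\to\{1,\dots,c\}$ such that every vertex $v$ has at least $\min\{k,\deg_G(v)\}$ neighbors $u$ with $\gamma(u)\neq\gamma(v)$. The $k$-edge-gadget transformation: given a graph $G$ and, for each edge $\{u,v\}\in E(G)$, a fixed choice of ordered pair $(u,v)$, the graph $G'$ is obtained from $G$ by keeping all vertices of $G$, deleting every edge $\{u,v\}$ of $G$, and for each such edge adding $k$ new vertices $(u,v,1),\dots,(u,v,k)$ that form a clique $K_k$, together with the edges $\{u,(u,v,j)\}$ for $j=1,\dots,k-1$ and the edge $\{v,(u,v,k)\}$. (The gadget vertices of distinct edges are distinct.) *)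

(* Defs.v *)
From mathcomp Require Import all_boot.
Set Implicit Arguments. Unset Strict Implicit. Unset Printing Implicit Defensive.

Definition simple_graph (V : finType) (e : rel V) : Prop :=
  symmetric e /\ irreflexive e.

Definition orientation (V : finType) (e : rel V) (o : rel V) : Prop :=
  (forall u v, o u v -> e u v) /\
  (forall u v, e u v -> o u v || o v u) /\
  (forall u v, o u v -> ~~ o v u).

Definition deg (V : finType) (e : rel V) (v : V) : nat := #|[set u | e v u]|.

Definition proper_coloring (V : finType) (e : rel V) (c : nat) (g : V -> 'I_c) : Prop :=
  forall u v, e u v -> g u != g v.

Definition partial_coloring (V : finType) (e : rel V) (k c : nat) (g : V -> 'I_c) : Prop :=
  forall v, minn k (deg e v) <= #|[set u | e v u & g u != g v]|.

(* Vertices of G': original vertices, plus k gadget vertices per oriented edge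
   (u,v); the gadget vertex (p, j) with j : 'I_k corresponds to (u,v,j+1). *)
Definition oedge (V : finType) (o : rel V) := {p : V * V | o p.1 p.2}.

Definition gadget_vertex (V : finType) (o : rel V) (k : nat) : finType :=
  (V + (oedge o * 'I_k))%type.

Definition gadget_attach (V : finType) (o : rel V) (k : nat)
  (u : V) (pj : oedge o * 'I_k) : bool :=
  let p := val pj.1 in let j := pj.2 in
  ((u == p.1) && (j < k.-1)) || ((u == p.2) && (j == k.-1 :> nat)).

Definition gadget_rel (V : finType) (o : rel V) (k : nat) : rel (gadget_vertex o k) :=
  fun x y =>
    match x, y with
    | inl _, inl _ => false
    | inl u, inr pj => gadget_attach u pj
    | inr pj, inl u => gadget_attach u pj
    | inr (p, i), inr (q, j) => (p == q) && (i != j)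
    end.

Arguments gadget_vertex {V} o k.
Arguments gadget_rel {V} o k.

(* Main.v *)
Require Import Defs.
From mathcomp Require Import all_boot.
From mathcomp Require Import zify.

Section S.
Variable n : nat.
Local Notation K := n.+1.

Definition fcol (c j : 'I_K) : 'I_K :=
  if (j == n :> nat) then c else
  inord (if c + 1 + j < K then c + 1 + j else c + 1 + j - K).

Lemma fcolE c j : (fcol c j : nat) =
  if (j == n :> nat) then (c : nat) else
  (if c + 1 + j < K then c + 1 + j else c + 1 + j - K).
Proof.
rewrite /fcol; case: ifP => // _; rewrite inordK //.
have := ltn_ord c; have := ltn_ord j; case: ifP; lia.
Qed.

Lemma fcol_inj c i j : fcol c i = fcol c j -> i = j.
Proof.
move/(congr1 (@nat_of_ord _)); rewrite !fcolE => H; apply: val_inj => /=.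
move: H; have := ltn_ord c; have := ltn_ord j; have := ltn_ord i.
repeat case: ifP; move=> *; lia.
Qed.

Lemma fcol_neq c (j : 'I_K) : (j < n) -> fcol c j != c.
Proof.
move=> Hj; apply/eqP => /(congr1 (@nat_of_ord _)); rewrite fcolE.
have := ltn_ord c; repeat case: ifP; move=> *; lia.
Qed.

Lemma fcol_n c (j : 'I_K) : (j == n :> nat) -> fcol c j = c.
Proof. by rewrite /fcol => ->. Qed.
End S.
Arguments fcol {n}. Arguments fcolE {n}. Arguments fcol_inj {n}. Arguments fcol_neq {n}. Arguments fcol_n {n}.

Lemma all_diff (T : finType) (r : rel T) k c (g : T -> 'I_c) x :
  partial_coloring r k g -> deg r x <= k ->
  forall y, r x y -> g y != g x.
Proof.
move=> Hp Hd y Hy; apply/negP => /eqP Heq.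
have := Hp x; rewrite /deg in Hd *.
have Hsub : [set u | r x u & g u != g x] \subset [set u | r x u] :\ y.
  apply/subsetP => u; rewrite !inE => /andP [-> Hu]; rewrite andbT.
  by apply: contra Hu => /eqP ->; rewrite Heq.
have := subset_leq_card Hsub.
rewrite [#|[set u | r x u]|](cardsD1 y) inE Hy /= in Hd *.
move=> H1 H2; have := leq_trans H2 H1; move: Hd; rewrite /minn; case: ifP; lia.
Qed.

Arguments all_diff {T r k c g x}.

Theorem lemma3 (k : nat) (V : finType) (e o : rel V) :
  3 <= k -> simple_graph e -> orientation e o ->
  (exists g : V -> 'I_k, proper_coloring e g) <->
  (exists g : gadget_vertex o k -> 'I_k, partial_coloring (gadget_rel o k) k g).
Proof.
case: k => [//|n] Hk [esym eirr] [oe [eo oas]]; split.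
- case=> g Hg.
  have Eq (q : oedge o) : g (val q).1 != g (val q).2 := Hg _ _ (oe _ _ (valP q)).
  pose G := (fun x : gadget_vertex o n.+1 => match x with inl u => g u
              | inr (p, j) => fcol (g (val p).1) j end).
  exists G => x.
  apply: (leq_trans (geq_minr _ _)); rewrite /deg.
  suff -> : [set u | gadget_rel o n.+1 x u & G u != G x] = [set u | gadget_rel o n.+1 x u] by [].
  apply/setP => y; rewrite !inE.
  case: x => [w|[p i]]; case: y => [w'|[q j]] //=.
  + case: (boolP (gadget_attach _ _)) => // Ha; rewrite /=.
    move: Ha; rewrite /gadget_attach /= => /orP [/andP[/eqP-> Hj]|/andP[/eqP-> Hj]].
    * exact: fcol_neq.
    * by rewrite fcol_n //; apply: Eq.
  + case: (boolP (gadget_attach _ _)) => // Ha; rewrite /=.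
    move: Ha; rewrite /gadget_attach /= => /orP [/andP[/eqP-> Hj]|/andP[/eqP-> Hj]].
    * by rewrite eq_sym fcol_neq.
    * by rewrite fcol_n // eq_sym; apply: Eq.
  + case: (boolP ((p == q) && (i != j))) => // /andP [/eqP <- Hij]; rewrite /=.
    by apply: contra Hij => /eqP /fcol_inj ->.
- case=> g' Hg'; exists (fun u => g' (inl u)).
  have key : forall u v, o u v -> g' (inl u) != g' (inl v).
    move=> u v Huv; pose p : oedge o := exist _ (u, v) Huv.
    have Hdeg (i : 'I_n.+1) : deg (gadget_rel o n.+1) (inr (p, i)) <= n.+1.
      rewrite /deg.
      have Hsub : [set y | gadget_rel o n.+1 (inr (p, i)) y] \subset
        inl (if i == n :> nat then v else u) |: [set inr (p, j) | j in [set~ i]].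
        apply/subsetP => y; rewrite !inE; case: y => [w|[q j]] /=.
        - rewrite /gadget_attach /= => /orP [/andP [/eqP -> Hi]| /andP[/eqP -> Hi]].
          + have -> : (i == n :> nat) = false by move: Hi; lia.
            by rewrite eqxx.
          + by rewrite Hi eqxx.
        - case/andP => /eqP <- Hij; apply/imsetP; exists j => //.
          by rewrite !inE eq_sym.
      apply: (leq_trans (subset_leq_card Hsub)); rewrite cardsU1.
      apply: (@leq_add _ _ 1 n); first by case: (_ \notin _).
      apply: (leq_trans (leq_imset_card _ _)).
      by rewrite cardsC1 card_ord.
    have Hd := fun i : 'I_n.+1 => all_diff Hg' (Hdeg i).
    have Hinj : injective (fun j => g' (inr (p, j))).
      move=> i j Hij; apply/eqP; apply: contraT => Hne.
      have := Hd i (inr (p, j)); rewrite /= eqxx Hne Hij eqxx => /(_ isT).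
      by [].
    have := inj_card_onto Hinj (leqnn _) (g' (inl u)).
    case/codomP => j Hj.
    have Hjn : (j == n :> nat).
      apply: contraT => Hjn.
      have := Hd j (inl u); rewrite /= /gadget_attach /= eqxx /= -Hj eqxx.
      have -> : j < n by have := ltn_ord j; move: Hjn; lia.
      by move=> /(_ isT).
    have := Hd j (inl v); rewrite /= /gadget_attach /= eqxx Hjn andbT orbT -Hj.
    by move=> /(_ isT); rewrite eq_sym.
  move=> u v Huv; case/orP: (eo _ _ Huv) => H; first exact: key.
  by rewrite eq_sym; apply: key.
Qed.
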